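(* Let $m,n,w,d,l$ be positive integers with $w\le m$. Let $n_0=n>n_1>\dots>n_{l-1}$ be a decreasing sequence of positive integers such that for all $1\le i\le l-1$: $n_i$ divides $nw$ and $\frac{nw}{m}\le n_i\le\left(1-\frac{d}{nw}\right)n_{i-1}$. Put $w_i=\frac{nw}{n_i}$. Then $$\sum_{i=0}^{l-1}B(n,n_i,d)\,A(m,n_i,w_i,d)\le B(mn,nw,d).$$
   Context: $J(m,w)$ denotes the set of binary vectors of length $m$ and Hamming weight $w$. Elements of $J(m,w)^n$ are identified with $m\times n$ binary matrices all of whose columns have weight $w$, with binary Hamming distance. $A(m,n,w,d)$ is the maximum cardinality of a nonempty subset of $J(m,w)^n$ with pairwise Hamming distances at least $2d$. $B(N,W,d)$ is the maximum cardinality of a nonempty subset of $J(N,W)$ with pairwise Hamming distances at least $2d$. *)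

(* Defs.v *)
From mathcomp Require Import all_boot all_order all_algebra.
Set Implicit Arguments. Unset Strict Implicit. Unset Printing Implicit Defensive.

(* Binary words indexed by a finite type I: {ffun I -> bool}.
   Vectors of length N: I = 'I_N.  m x n binary matrices: I = 'I_m * 'I_n
   (entry (i,j) = row i, column j). *)

Definition hwt (I : finType) (x : {ffun I -> bool}) : nat := #|[set i | x i]|.
Definition hdist (I : finType) (x y : {ffun I -> bool}) : nat :=
  #|[set i | x i != y i]|.

Definition is_code (I : finType) (P : pred {ffun I -> bool}) (d : nat)
  (C : {set {ffun I -> bool}}) : bool :=
  [&& C != set0, [forall x in C, P x] &
      [forall x in C, forall y in C, (x != y) ==> (2 * d <= hdist x y)]].

(* maximum cardinality of such a code (0 if none exists) *)
Definition maxcode (I : finType) (P : pred {ffun I -> bool}) (d : nat) : nat :=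
  \max_(C : {set {ffun I -> bool}} | @is_code I P d C) #|C|.

Definition inJ (N W : nat) : pred {ffun 'I_N -> bool} := fun x => hwt x == W.

Definition inJn (m n w : nat) : pred {ffun ('I_m * 'I_n)%type -> bool} :=
  fun x => [forall j : 'I_n, #|[set i : 'I_m | x (i, j)]| == w].

Definition Bcode (N W d : nat) : nat := @maxcode _ (@inJ N W) d.
Definition Acode (m n w d : nat) : nat := @maxcode _ (@inJn m n w) d.

(* Main.v *)
Require Import Defs.
From mathcomp Require Import all_boot all_order all_algebra.
From mathcomp Require Import zify ring lra.
Import GRing.Theory Num.Theory.

Module Helpers.
Import Order.TTheory GRing.Theory Num.Theory.
Set Implicit Arguments. Unset Strict Implicit. Unset Printing Implicit Defensive.

Lemma card_set_nat (T : finType) (p : pred T) : #|[set x | p x]| = \sum_x (p x : nat).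
Proof.
rewrite -sum1_card big_mkcond /=; apply: eq_bigr => x _; rewrite inE; by case: (p x).
Qed.

Lemma colsum (I J : finType) (p : pred (I * J)) :
  #|[set q | p q]| = \sum_(j : J) #|[set i | p (i, j)]|.
Proof.
rewrite card_set_nat (eq_bigr (fun j => \sum_i (p (i, j) : nat))); last first.
  by move=> j _; rewrite card_set_nat.
rewrite exchange_big pair_big /=; apply: eq_bigr => -[i j] //.
Qed.

Lemma hdist_inter (I : finType) (X Y : {ffun I -> bool}) T :
  hwt X = T -> hwt Y = T ->
  hdist X Y = 2 * (T - #|[set i | X i && Y i]|).
Proof.
rewrite /hwt /hdist => hX hY.
set A := [set i | X i]; set B := [set i | Y i].
have -> : [set i | X i != Y i] = (A :\: B) :|: (B :\: A).
  by apply/setP => i; rewrite !inE; case: (X i); case: (Y i).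
have -> : [set i | X i && Y i] = A :&: B by apply/setP => i; rewrite !inE.
have H := cardsUI (A :\: B) (B :\: A).
have E0 : (A :\: B) :&: (B :\: A) = set0.
  by apply/setP => i; rewrite !inE; case: (X i); case: (Y i).
rewrite E0 cards0 addn0 !cardsD (setIC B A) in H.
have : #|A :&: B| <= #|A| by apply: subset_leq_card; apply: subsetIl.
move: H; rewrite hX hY. lia.
Qed.

Lemma hdist_sym (I : finType) (X Y : {ffun I -> bool}) : hdist X Y = hdist Y X.
Proof. by rewrite /hdist; apply: eq_card => i; rewrite !inE eq_sym. Qed.

Lemma hdist0 (I : finType) (X : {ffun I -> bool}) : hdist X X = 0.
Proof. by rewrite /hdist; apply: eq_card0 => i; rewrite !inE eqxx. Qed.

Lemma card_bij (I J : finType) (phi : J -> I) (p : pred I) :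
  bijective phi -> #|[set j | p (phi j)]| = #|[set i | p i]|.
Proof.
case=> psi h1 h2.
have inj : injective phi by apply: (can_inj h1).
rewrite -(card_imset _ inj); apply: eq_card => i; rewrite inE.
apply/imsetP/idP => [[j]|pi]; first by rewrite inE => pj ->.
by exists (psi i); rewrite ?inE h2.
Qed.

Definition precode (I : finType) (P : pred {ffun I -> bool}) (d : nat)
  (C : {set {ffun I -> bool}}) :=
  (forall x, x \in C -> P x) /\
  (forall x y, x \in C -> y \in C -> x != y -> 2 * d <= hdist x y).

Definition bestcode (I : finType) (P : pred {ffun I -> bool}) (d : nat) :=
  odflt set0 [pick C | is_code P d C && (#|C| == maxcode P d)].

Lemma bestcodeP (I : finType) (P : pred {ffun I -> bool}) (d : nat) :
  #|bestcode P d| = maxcode P d /\ precode P d (bestcode P d).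
Proof.
rewrite /bestcode; case: pickP => [C /andP[hC /eqP e]|none] /=.
  split=> //; case/and3P: hC => _ /forallP h1 /forallP h2; split.
    by move=> x xC; have := h1 x; rewrite xC.
  move=> x y xC yC nxy; have := h2 x; rewrite xC /= => /forallP /(_ y).
  by rewrite yC /= nxy.
split; last by split=> [x|x y]; rewrite inE.
rewrite cards0 /maxcode.
case: (posnP #|[pred C | is_code P d C]|) => [e|pos].
  rewrite big_pred0 // => C; apply/negbTE/negP => hC.
  by move: e; move/eqP; rewrite -/(pred0b _) => /pred0P /(_ C) /=; rewrite hC.
case: (eq_bigmax_cond (fun C : {set {ffun I -> bool}} => #|C|) pos) => C0 hC0 e.
have := none C0; rewrite inE in hC0; rewrite hC0 /= /maxcode.
by rewrite -e eqxx.
Qed.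

Lemma le_maxcode (I : finType) (P : pred {ffun I -> bool}) (d : nat) C :
  is_code P d C -> #|C| <= maxcode P d.
Proof. by move=> h; apply: leq_bigmax_cond. Qed.


Definition gfun n N (c0 : 'I_n) (b : {ffun 'I_n -> bool}) (k : 'I_N) : 'I_n :=
  nth c0 (enum [set c | b c]) k.

Definition emb m n N (c0 : 'I_n) (b : {ffun 'I_n -> bool})
  (a : {ffun 'I_m * 'I_N -> bool}) : {ffun 'I_m * 'I_n -> bool} :=
  [ffun p => [exists k : 'I_N, (gfun c0 b k == p.2) && a (p.1, k)]].

Lemma size_enum_b n (b : {ffun 'I_n -> bool}) : size (enum [set c | b c]) = hwt b.
Proof. by rewrite /hwt cardE. Qed.

Lemma gfun_inj n N c0 (b : {ffun 'I_n -> bool}) :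
  hwt b = N -> injective (@gfun n N c0 b).
Proof.
move=> hb i j; rewrite /gfun => /eqP; rewrite nth_uniq ?size_enum_b ?hb ?ltn_ord ?enum_uniq //.
by move/eqP/val_inj.
Qed.

Lemma gfun_mem n N c0 (b : {ffun 'I_n -> bool}) (k : 'I_N) :
  hwt b = N -> b (gfun c0 b k).
Proof.
move=> hb; have : gfun c0 b k \in enum [set c | b c].
  by rewrite /gfun mem_nth // size_enum_b hb ltn_ord.
by rewrite mem_enum inE.
Qed.

Lemma gfun_surj n N c0 (b : {ffun 'I_n -> bool}) (c : 'I_n) :
  hwt b = N -> b c -> exists k : 'I_N, gfun c0 b k = c.
Proof.
move=> hb bc.
have ci : c \in enum [set c | b c] by rewrite mem_enum inE.
have lt : index c (enum [set c | b c]) < N by rewrite -hb -size_enum_b index_mem.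
by exists (Ordinal lt); rewrite /gfun /= nth_index.
Qed.

Lemma embE (m n N : nat) (c0 : 'I_n) (b : {ffun 'I_n -> bool}) (a : {ffun 'I_m * 'I_N -> bool}) r k :
  hwt b = N -> emb c0 b a (r, @gfun n N c0 b k) = a (r, k).
Proof.
move=> hb; rewrite /emb ffunE /=; apply/existsP/idP => [[k']|akr].
  by case/andP => /eqP /(gfun_inj hb) ->.
by exists k; rewrite eqxx.
Qed.

Lemma emb_supp (m n N : nat) (c0 : 'I_n) (b : {ffun 'I_n -> bool}) (a : {ffun 'I_m * 'I_N -> bool}) r (c : 'I_n) :
  hwt b = N -> emb c0 b a (r, c) -> b c.
Proof.
by move=> hb; rewrite /emb ffunE /= => /existsP [k /andP [/eqP <- _]]; apply: gfun_mem.
Qed.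

Lemma emb_col (m n N W : nat) (c0 : 'I_n) (b : {ffun 'I_n -> bool}) (a : {ffun 'I_m * 'I_N -> bool}) (c : 'I_n) :
  hwt b = N -> @inJn m N W a -> #|[set r | emb c0 b a (r, c)]| = b c * W.
Proof.
move=> hb /forallP ha; case bc: (b c).
  case: (gfun_surj c0 hb bc) => k <-.
  rewrite mul1n -(eqP (ha k)); apply: eq_card => r; rewrite !inE embE //.
rewrite mul0n; apply: eq_card0 => r; rewrite !inE.
by apply/negP => /(emb_supp hb); rewrite bc.
Qed.

Lemma emb_hwt (m n N W : nat) (c0 : 'I_n) (b : {ffun 'I_n -> bool}) (a : {ffun 'I_m * 'I_N -> bool}) :
  hwt b = N -> @inJn m N W a -> hwt (emb c0 b a) = N * W.
Proof.
move=> hb ha; rewrite /hwt (colsum (fun p => emb c0 b a p)).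
rewrite (eq_bigr (fun c => b c * W)); last by move=> c _; rewrite (emb_col _ _ hb ha).
by rewrite -big_distrl /= -card_set_nat -hb.
Qed.

Lemma emb_same (m n N : nat) (c0 : 'I_n) (b : {ffun 'I_n -> bool}) (a a' : {ffun 'I_m * 'I_N -> bool}) :
  hwt b = N -> hdist (emb c0 b a) (emb c0 b a') = hdist a a'.
Proof.
move=> hb; rewrite /hdist.
have hinj : injective (fun q : 'I_m * 'I_N => (q.1, gfun c0 b q.2)).
  by move=> [r k] [r' k'] /= [-> /(gfun_inj hb) ->].
rewrite -(card_imset _ hinj); apply: eq_card => -[r c]; rewrite inE.
case bc: (b c).
  case: (gfun_surj c0 hb bc) => k <-; rewrite !embE //.
  apply/idP/imsetP => [h|[[r' k'] /=]]; first by exists (r, k); rewrite ?inE.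
  by rewrite inE => h [-> /(gfun_inj hb) ->].
apply/idP/imsetP => [|[[r' k'] /=] _ [_ e]].
  case e1: (emb c0 b a (r, c)); first by move: (emb_supp hb e1); rewrite bc.
  case e2: (emb c0 b a' (r, c)); first by move: (emb_supp hb e2); rewrite bc.
  by [].
by move: (gfun_mem c0 k' hb); rewrite -e bc.
Qed.


Lemma inter_bound (m n K : nat) (X Y : {ffun 'I_m * 'I_n -> bool})
  (b b' : {ffun 'I_n -> bool}) :
  (forall r c, X (r, c) -> b c) -> (forall r c, Y (r, c) -> b' c) ->
  (forall c, #|[set r | X (r, c)]| <= K) ->
  #|[set p | X p && Y p]| <= #|[set c | b c && b' c]| * K.
Proof.
move=> hX hY hK.
rewrite (colsum (fun p => X p && Y p)) card_set_nat big_distrl /=; apply: leq_sum => c _.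
case: (boolP (b c && b' c)) => h.
  rewrite mul1n; apply: leq_trans (hK c); apply: subset_leq_card.
  by apply/subsetP => r; rewrite !inE => /andP[].
rewrite mul0n leqn0; apply/eqP; apply: eq_card0 => r; rewrite !inE.
by apply/negP => /andP[x y]; move: h; rewrite (hX _ _ x) (hY _ _ y).
Qed.

Lemma dist_same (m n N W T d : nat) (c0 : 'I_n) (b b' : {ffun 'I_n -> bool})
  (a a' : {ffun 'I_m * 'I_N -> bool}) :
  N * W = T -> 0 < W -> hwt b = N -> hwt b' = N -> @inJn m N W a -> @inJn m N W a' ->
  (b != b' -> 2 * d <= hdist b b') -> (a != a' -> 2 * d <= hdist a a') ->
  (b, a) != (b', a') ->
  2 * d <= hdist (emb c0 b a) (emb c0 b' a').
Proof.
move=> hT hW hb hb' ha ha' hdb hda.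
case: (eqVneq b b') => [<-|nb] hne.
  rewrite emb_same //; apply: hda; apply: contra hne => /eqP ->; by [].
have e1 : hdist b b' = 2 * (N - #|[set c | b c && b' c]|) := hdist_inter hb hb'.
have := hdb nb; rewrite e1 => h1.
have e2 : hdist (emb c0 b a) (emb c0 b' a') =
  2 * (N * W - #|[set p | emb c0 b a p && emb c0 b' a' p]|) :=
  hdist_inter (emb_hwt c0 hb ha) (emb_hwt c0 hb' ha').
rewrite e2.
have hc : forall c, #|[set r | emb c0 b a (r, c)]| <= W.
  by move=> c; rewrite (emb_col _ _ hb ha); case: (b c); rewrite ?mul1n ?mul0n.
have h2 := inter_bound (fun r c => @emb_supp m n N c0 b a r c hb)
  (fun r c => @emb_supp m n N c0 b' a' r c hb') hc.
have hs : #|[set c | b c && b' c]| <= N.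
  rewrite -hb; apply: subset_leq_card; apply/subsetP => c; rewrite !inE.
  by case/andP.
have h3 : (#|[set c | b c && b' c]| + d) * W <= N * W.
  by rewrite leq_mul2r; apply/orP; right; lia.
have h4 : d <= d * W by rewrite leq_pmulr.
rewrite mulnDl in h3. lia.
Qed.

Lemma dist_diff (m n N1 W1 N2 W2 T d : nat) (c0 : 'I_n) (b b' : {ffun 'I_n -> bool})
  (a : {ffun 'I_m * 'I_N1 -> bool}) (a' : {ffun 'I_m * 'I_N2 -> bool}) :
  N1 * W1 = T -> N2 * W2 = T -> N2 * W1 + d <= T ->
  hwt b = N1 -> hwt b' = N2 -> @inJn m N1 W1 a -> @inJn m N2 W2 a' ->
  2 * d <= hdist (emb c0 b a) (emb c0 b' a').
Proof.
move=> hT1 hT2 hd hb hb' ha ha'.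
have e2 : hdist (emb c0 b a) (emb c0 b' a') =
  2 * (T - #|[set p | emb c0 b a p && emb c0 b' a' p]|) :=
  hdist_inter (etrans (emb_hwt c0 hb ha) hT1) (etrans (emb_hwt c0 hb' ha') hT2).
rewrite e2.
have hc : forall c, #|[set r | emb c0 b a (r, c)]| <= W1.
  by move=> c; rewrite (emb_col _ _ hb ha); case: (b c); rewrite ?mul1n ?mul0n.
have h2 := inter_bound (fun r c => @emb_supp m n N1 c0 b a r c hb)
  (fun r c => @emb_supp m n N2 c0 b' a' r c hb') hc.
have h3 : #|[set c | b c && b' c]| <= N2.
  rewrite -hb'; apply: subset_leq_card; apply/subsetP => c; rewrite !inE.
  by case/andP.
have h4 : #|[set c | b c && b' c]| * W1 <= N2 * W1 by rewrite leq_mul2r h3 orbT.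
lia.
Qed.


Lemma rat_step (x y d T : nat) : 0 < T ->
  ((x%:R <= (1 - d%:R / T%:R) * y%:R :> rat)%R) -> x * T + d * y <= T * y.
Proof.
move=> hT H.
rewrite -(ler_nat rat) natrD !natrM.
have hT' : (0 < T%:R :> rat)%R by rewrite ltr0n.
have := ler_wpM2r (ltW hT') H.
have -> : ((1 - d%:R / T%:R) * y%:R * T%:R = T%:R * y%:R - d%:R * y%:R :> rat)%R.
  by field; rewrite lt0r_neq0.
lra.
Qed.

End Helpers.
Import Helpers.

Theorem proposition7 (m n w d l : nat) (ns : nat -> nat) :
  0 < m -> 0 < n -> 0 < w -> 0 < d -> 0 < l -> w <= m ->
  ns 0 = n ->
  (forall i, i < l -> 0 < ns i) ->
  (forall i, 1 <= i <= l.-1 -> ns i < ns i.-1) ->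
  (forall i, 1 <= i <= l.-1 ->
     [/\ ns i %| n * w,
         ((n * w)%:R / m%:R <= (ns i)%:R :> rat)%R &
         ((ns i)%:R <= (1 - d%:R / (n * w)%:R) * (ns i.-1)%:R :> rat)%R]) ->
  \sum_(i < l) Bcode n (ns i) d * Acode m (ns i) (n * w %/ ns i) d
    <= Bcode (m * n) (n * w) d.
Proof.
move=> hm hn hw hd hl hwm h0 hpos hdec hcond.
set T := n * w.
have hT : 0 < T by rewrite /T muln_gt0 hn hw.
have hstep : forall i, 1 <= i <= l.-1 -> ns i * T + d * ns i.-1 <= T * ns i.-1.
  by move=> i hi; case: (hcond i hi) => _ _ h; apply: rat_step.
have hmono : forall i j, i <= j -> j < l -> ns j <= ns i.
  move=> i j hij; elim: j hij => [|j IH] hij hj.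
    by rewrite leqn0 in hij; rewrite (eqP hij).
  case: (ltngtP i j.+1) => [hlt|hgt|<-] //; last by lia.
  have h := hdec j.+1; have h' : ns j.+1 < ns j by apply: h; lia.
  have hij2 : i <= j by lia.
  have := IH hij2 (ltnW hj); lia.
have hle_n : forall i, i < l -> ns i <= n.
  by move=> i hi; rewrite -h0; apply: hmono.
have hchain : forall i j, i < j -> j < l -> ns j * T + d * ns i <= T * ns i.
  move=> i j hij; elim: j hij => [|j IH] hij hj //.
  have s := hstep j.+1; rewrite /= in s.
  have s' : ns j.+1 * T + d * ns j <= T * ns j by apply: s; lia.
  case: (ltngtP i j) => [hlt|hgt|e]; last by rewrite e.
  - have := IH hlt (ltnW hj).
    have hij' : ns j <= ns i by apply: hmono; lia.
    have : d <= T.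
      have := hpos j (ltnW hj); nia.
    nia.
  - lia.
have hWN : forall i, i < l -> (T %/ ns i) * ns i = T.
  case=> [|i] hi; first by rewrite h0 /T mulKn // mulnC.
  by rewrite divnK //; case: (hcond i.+1 _) => //; lia.
have hWpos : forall i, i < l -> 0 < T %/ ns i.
  move=> i hi; have := hWN i hi; case: (T %/ ns i) => //=; lia.
have hcross : forall i j, i < j -> j < l -> ns j * (T %/ ns i) + d <= T.
  move=> i j hij hj; have h := hchain i j hij hj.
  have e := hWN i (ltn_trans hij hj).
  have p := hpos i (ltn_trans hij hj).
  rewrite -(leq_pmul2r p); nia.
pose c0 : 'I_n := Ordinal hn.
pose W (i : nat) := T %/ ns i.
pose CB (i : 'I_l) := bestcode (@inJ n (ns i)) d.
pose CA (i : 'I_l) := bestcode (@inJn m (ns i) (W i)) d.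
pose Ci (i : 'I_l) : {set {ffun 'I_m * 'I_n -> bool}} :=
  [set emb c0 p.1 p.2 | p in setX (CB i) (CA i)].
have CBw : forall i b, b \in CB i -> hwt b = ns i.
  by move=> i b hb; apply/eqP; exact: ((bestcodeP _ _).2.1 _ hb).
have CAw : forall i a, a \in CA i -> @inJn m (ns i) (W i) a.
  by move=> i a ha; exact: ((bestcodeP _ _).2.1 _ ha).
have CBd : forall i b b', b \in CB i -> b' \in CB i -> b != b' -> 2 * d <= hdist b b'.
  by move=> i b b' hb hb'; exact: ((bestcodeP _ _).2.2 _ _ hb hb').
have CAd : forall i a a', a \in CA i -> a' \in CA i -> a != a' -> 2 * d <= hdist a a'.
  by move=> i a a' ha ha'; exact: ((bestcodeP _ _).2.2 _ _ ha ha').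
have same : forall i p q, p \in setX (CB i) (CA i) -> q \in setX (CB i) (CA i) ->
    p != q -> 2 * d <= hdist (emb c0 p.1 p.2) (emb c0 q.1 q.2).
  move=> i [b a] [b' a'] /setXP [hb ha] /setXP [hb' ha'] hne /=.
  apply: (@dist_same m n (ns i) (W i) T d).
  - by rewrite mulnC; apply: hWN.
  - by apply: hWpos.
  - exact: CBw hb.
  - exact: CBw hb'.
  - exact: CAw ha.
  - exact: CAw ha'.
  - exact: CBd hb hb'.
  - exact: CAd ha ha'.
  - exact: hne.
have core : forall (i j : 'I_l) x y, x \in Ci i -> y \in Ci j ->
    (i != j) || (x != y) -> 2 * d <= hdist x y.
  move=> i j x y /imsetP [[b a] hp ->] /imsetP [[b' a'] hq ->] hne.
  case/setXP: (hp) => hb ha; case/setXP: (hq) => hb' ha'.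
  case: (ltngtP i j) => [hij|hji|eij].
  - apply: (@dist_diff m n (ns i) (W i) (ns j) (W j) T d) => /=.
    + by rewrite mulnC; apply: hWN.
    + by rewrite mulnC; apply: hWN.
    + exact: hcross.
    + exact: CBw hb.
    + exact: CBw hb'.
    + exact: CAw ha.
    + exact: CAw ha'.
  - rewrite hdist_sym.
    apply: (@dist_diff m n (ns j) (W j) (ns i) (W i) T d) => /=.
    + by rewrite mulnC; apply: hWN.
    + by rewrite mulnC; apply: hWN.
    + exact: hcross.
    + exact: CBw hb'.
    + exact: CBw hb.
    + exact: CAw ha'.
    + exact: CAw ha.
  - have eij' : i = j by apply: val_inj.
    subst j; rewrite eqxx /= in hne.
    apply: (same i (b, a) (b', a')) => //.
    by apply: contra hne => /eqP [-> ->].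
have eSum : \sum_(i < l) Bcode n (ns i) d * Acode m (ns i) (T %/ ns i) d
    = \sum_(i < l) #|Ci i|.
  apply: eq_bigr => i _.
  have eB := (bestcodeP (@inJ n (ns i)) d).1.
  have eA := (bestcodeP (@inJn m (ns i) (W i)) d).1.
  rewrite /Bcode /Acode -eB -eA -cardsX card_in_imset //.
  move=> p q hp hq e; apply/eqP; apply/negPn/negP => hne.
  by have := same i p q hp hq hne; rewrite e hdist0; lia.
pose Pset := [set q : {ffun 'I_m * 'I_n -> bool} * 'I_l | q.1 \in Ci q.2].
pose Code := [set q.1 | q in Pset].
have ePset : #|Pset| = \sum_(i < l) #|Ci i|.
  rewrite /Pset (colsum (fun q : {ffun 'I_m * 'I_n -> bool} * 'I_l => q.1 \in Ci q.2)).
  by apply: eq_bigr => i _; apply: eq_card => x; rewrite inE.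
have eCode : #|Code| = #|Pset|.
  apply: card_in_imset => -[x i] [y j]; rewrite !inE /= => hx hy exy; subst y.
  case: (eqVneq i j) => [->//|nij].
  by have := core i j x x hx hy; rewrite nij hdist0 /=; lia.
have inCode : forall x, x \in Code -> exists i, x \in Ci i.
  by move=> x /imsetP [[x' i] hq ->]; exists i; rewrite inE in hq.
pose phi (k : 'I_(m * n)) : 'I_m * 'I_n := enum_val (cast_ord (esym (mxvec_cast m n)) k).
pose psi (p : 'I_m * 'I_n) : 'I_(m * n) := cast_ord (mxvec_cast m n) (enum_rank p).
have psiK : forall p, phi (psi p) = p.
  by move=> p; rewrite /phi /psi cast_ordK enum_rankK.
have phiK : forall k, psi (phi k) = k.
  by move=> k; rewrite /phi /psi enum_valK cast_ordKV.
have phib : bijective phi by exists psi.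
pose tr (x : {ffun 'I_m * 'I_n -> bool}) : {ffun 'I_(m * n) -> bool} := [ffun k => x (phi k)].
have trinj : injective tr.
  move=> x y e; apply/ffunP => p; have := congr1 (fun f : {ffun 'I_(m * n) -> bool} => f (psi p)) e.
  by rewrite /tr /= !ffunE psiK.
have hwt_tr : forall x, hwt (tr x) = hwt x.
  move=> x; rewrite /hwt -(card_bij (fun q => x q) phib).
  by apply: eq_card => k; rewrite !inE ffunE.
have hdist_tr : forall x y, hdist (tr x) (tr y) = hdist x y.
  move=> x y; rewrite /hdist -(card_bij (fun q => x q != y q) phib).
  by apply: eq_card => k; rewrite !inE !ffunE.
have hwtC : forall i x, x \in Ci i -> hwt x = T.
  move=> i x /imsetP [[b a] /setXP [hb ha] ->] /=.
  rewrite (emb_hwt c0 (CBw _ _ hb) (CAw _ _ ha)) mulnC; exact: hWN.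
rewrite eSum -ePset -eCode -(card_imset _ trinj).
case: (posnP #|tr @: Code|) => [->//|pos].
apply: le_maxcode; apply/and3P; split.
- by rewrite -card_gt0.
- apply/forallP => y; apply/implyP => /imsetP [x hx ->].
  case: (inCode x hx) => i hi.
  by rewrite /inJ hwt_tr (hwtC i x hi).
- apply/forallP => y; apply/implyP => /imsetP [x1 hx1 ->].
  apply/forallP => z; apply/implyP => /imsetP [x2 hx2 ->].
  apply/implyP => ne; rewrite hdist_tr.
  case: (inCode x1 hx1) => i hi; case: (inCode x2 hx2) => j hj.
  apply: (core i j) => //; apply/orP; right.
  by apply: contra ne => /eqP ->.
Qed.
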